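(* Let $1\le m\le n$ be integers and $\sigma_1^2,\dots,\sigma_n^2>0$. The optimal value of the problem \[ \max_\eta\ \sum_{M\subset[n]:|M|=m}\Big(\sum_{l\in M}\eta_{M\setminus\{l\}}\sigma_l^2\Big)\,\mathrm{Ent}\big(\{\eta_{M\setminus\{l\}}\sigma_l^2\}_{l\in M}\big) \] subject to $\sum_{F\subset[n]:|F|=m-1}\eta_F=1$, $\eta_F\ge0$ for all $F\subset[n]$ with $|F|=m-1$, is at least $\frac13\sum_{j\in G^{m}}\sigma_j^2\ln(m)$.
   Context: For a nonnegative vector $a$, $\mathrm{Ent}(a)=-\sum_i\hat a_i\ln\hat a_i$ with $\hat a_i=a_i/\sum_ja_j$ and $0\ln 0=0$ (a term whose vector is identically zero contributes $0$). Let $\underline\sigma^2=\min_i\sigma_i^2$, $G_j=\{i\in[n]:2^{j-1}\le\sigma_i^2/\underline\sigma^2<2^j\}$ for $j=1,\dots,k$ covering $[n]$, and $G^{m}=\bigcup_{j:|G_j|>2m}G_j$. *)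

(* Defs.v *)
From HB Require Import structures.
From mathcomp Require Import all_boot all_order all_algebra.
From mathcomp Require Import reals exp.
Set Implicit Arguments. Unset Strict Implicit. Unset Printing Implicit Defensive.
Import Order.TTheory GRing.Theory Num.Theory.
Local Open Scope ring_scope.

Definition Ent (R : realType) (I : finType) (A : {set I}) (a : I -> R) : R :=
  let S := \sum_(j in A) a j in
  - \sum_(i in A) (if a i == 0 then 0 else (a i / S) * ln (a i / S)).

(* underline sigma^2 = min_i sigma_i^2 (n = 0 never arises: n >= 1). *)
Definition sigmin (R : realType) (n : nat) : ('I_n -> R) -> R :=
  match n return ('I_n -> R) -> R with
  | 0 => fun _ => 0
  | n'.+1 => fun s => \big[Num.min/s ord0]_(i < n'.+1) s i
  end.

Definition Gj (R : realType) (n : nat) (s : 'I_n -> R) (j : nat) : {set 'I_n} :=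
  [set i | (2 ^+ j.-1 <= s i / sigmin s) && (s i / sigmin s < 2 ^+ j)].

Definition Gm (R : realType) (n : nat) (s : 'I_n -> R) (k m : nat) : {set 'I_n} :=
  \bigcup_(1 <= j < k.+1 | (2 * m < #|Gj s j|)%N) Gj s j.

Definition objective (R : realType) (n m : nat) (s : 'I_n -> R)
    (eta : {set 'I_n} -> R) : R :=
  \sum_(M : {set 'I_n} | #|M| == m)
     (\sum_(l in M) eta (M :\ l) * s l) * Ent M (fun l => eta (M :\ l) * s l).

(* Main.v *)
Require Import Defs.
From HB Require Import structures.
From mathcomp Require Import all_boot all_order all_algebra.
From mathcomp Require Import reals exp.
From mathcomp Require Import lra zify.
Import Order.TTheory GRing.Theory Num.Theory.
Local Open Scope ring_scope.

Lemma sum_sub_le (R : realType) (I : finType) (P Q : pred I) (f : I -> R) :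
  (forall i, 0 <= f i) -> (forall i, P i -> Q i) ->
  \sum_(i | P i) f i <= \sum_(i | Q i) f i.
Proof.
move=> f0 PQ; rewrite [X in _ <= X](bigID P) /=.
rewrite (eq_bigl P); last by move=> i; case Pi: (P i); rewrite ?andbF // (PQ _ Pi).
by rewrite lerDl sumr_ge0.
Qed.

Lemma mem_bigcup_seq (T : finType) (r : seq nat) (P : pred nat)
   (A : nat -> {set T}) x :
  x \in \big[@setU T/set0]_(j <- r | P j) A j -> exists j, [/\ j \in r, P j & x \in A j].
Proof.
elim: r => [|a r IH]; first by rewrite big_nil inE.
rewrite big_cons; case: ifP => Pa.
  rewrite inE => /orP[xa|/IH [j [jr Pj xj]]]; first by exists a; rewrite mem_head.
  by exists j; rewrite in_cons jr orbT.
by move=> /IH [j [jr Pj xj]]; exists j; rewrite in_cons jr orbT.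
Qed.

Lemma sub_bigcup_seq (T : finType) (r : seq nat) (P : pred nat)
   (A : nat -> {set T}) j y :
  j \in r -> P j -> y \in A j -> y \in \big[@setU T/set0]_(j <- r | P j) A j.
Proof.
elim: r => [|a r IH] //; rewrite in_cons big_cons => /orP[/eqP <-|jr] Pj yA.
  by rewrite Pj inE yA.
by case: ifP => _; rewrite ?inE IH ?orbT.
Qed.

Lemma sigmin_gt0 (R : realType) (n : nat) (s : 'I_n -> R) :
  (0 < n)%N -> (forall i, 0 < s i) -> 0 < sigmin s.
Proof.
case: n s => [|n] s // _ hs /=.
by apply: (big_ind (fun x => 0 < x)) => // x y hx hy; rewrite lt_min hx hy.
Qed.

Lemma grp (R : realType) (n : nat) (s : 'I_n -> R) j x y :
  0 < sigmin s -> x \in Gj s j -> y \in Gj s j -> s x < 2 * s y.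
Proof.
move=> c0; rewrite !inE => /andP[_ hx] /andP[hy _].
have h2 : (2 : R) ^+ j <= 2 * 2 ^+ j.-1.
  by case: j {hx hy} => [|j]; rewrite ?expr0 ?exprS //= mulr1 ler1n.
have : s x / sigmin s < (2 * s y) / sigmin s.
  by rewrite -mulrA; apply: (lt_le_trans hx); apply: le_trans h2 _; rewrite ler_pM2l.
by rewrite ltr_pM2r ?invr_gt0.
Qed.

Lemma double_count (R : realType) (T : finType) (m : nat) (f : {set T} -> T -> R) :
  (1 <= m)%N ->
  \sum_(M : {set T} | #|M| == m) \sum_(l in M) f (M :\ l) l =
  \sum_(F : {set T} | #|F| == m.-1) \sum_(l | l \notin F) f F l.
Proof.
move=> m1.
rewrite (exchange_big_dep xpredT) //= [RHS](exchange_big_dep xpredT) //=.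
apply: eq_bigr => l _.
rewrite (reindex_onto (fun F => l |: F) (fun M => M :\ l)); last first.
  by move=> M /andP[_ lM]; rewrite setD1K.
apply: eq_big => F.
  case lF: (l \in F).
    rewrite /= andbF; apply: negbTE; apply/negP => /andP[_ /eqP e].
    by move: lF; rewrite -e !inE eqxx.
  rewrite setU1K ?lF // eqxx andbT cardsU1 lF setU11 andbT.
  by rewrite /=; apply/idP/idP => /eqP h; apply/eqP; lia.
by move=> /andP[_ /eqP ->].
Qed.

Lemma comb (R : realType) (n m k : nat) (s : 'I_n -> R) (F : {set 'I_n}) :
  0 < sigmin s -> (forall i, 0 < s i) -> #|F| = m.-1 ->
  1 / 3 * \sum_(j in Gm s k m) s j <= \sum_(l | l \notin F) s l.
Proof.
move=> c0 hs hF.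
set O := \sum_(l in Gm s k m | l \notin F) s l.
have O0 : 0 <= O by rewrite sumr_ge0 // => i _; apply: ltW.
have hO : O <= \sum_(l | l \notin F) s l.
  by apply: sum_sub_le => [i|i /andP[]//]; apply: ltW.
have pe : forall x, x \in Gm s k m -> x \in F -> #|F|%:R * s x <= 2 * O.
  move=> x /mem_bigcup_seq [j [jr Pj xj]] xF.
  set B := Gj s j :\: F.
  have cB : (#|F| <= #|B|)%N.
    rewrite cardsD.
    have : (#|Gj s j :&: F| <= #|F|)%N by apply: subset_leq_card; apply: subsetIr.
    move: Pj; lia.
  apply: (@le_trans _ _ (#|B|%:R * s x)).
    by rewrite ler_wpM2r ?ler_nat // ltW.
  rewrite mulr_natl -sumr_const.
  apply: (@le_trans _ _ (\sum_(y in B) 2 * s y)).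
    apply: ler_sum => y; rewrite inE => /andP[_ yj].
    exact: ltW (@grp _ _ s j x y c0 xj yj).
  rewrite -mulr_sumr ler_wpM2l //.
  apply: sum_sub_le => [y|y]; first exact: ltW.
  rewrite inE => /andP[yF yj]; rewrite yF andbT.
  exact: (@sub_bigcup_seq _ _ (fun j => (2 * m < #|Gj s j|)%N) (fun j => Gj s j) j y jr Pj yj).
have hI : \sum_(i in Gm s k m | i \in F) s i <= 2 * O.
  case F0: (#|F| == 0)%N.
    move/eqP: F0 => /cards0_eq F0.
    apply: (@le_trans _ _ (\sum_(i in F) s i)).
      by apply: sum_sub_le => [i|i /andP[]//]; apply: ltW.
    by rewrite F0 big_set0 mulr_ge0.
  set c := 2 * O / #|F|%:R.
  have c0' : 0 <= c by rewrite divr_ge0 ?mulr_ge0.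
  apply: (@le_trans _ _ (\sum_(i in Gm s k m | i \in F) c)).
    apply: ler_sum => i /andP[iG iF].
    by rewrite ler_pdivlMr ?ltr0n ?lt0n ?F0 // mulrC pe.
  apply: (@le_trans _ _ (\sum_(i in F) c)).
    by apply: sum_sub_le => [i|i /andP[]//].
  by rewrite sumr_const /c -[_ *+ #|F|]mulr_natr divfK // pnatr_eq0 F0.
rewrite (bigID (fun l => l \in F)) /=.
rewrite -/O.
lra.
Qed.

Theorem lemma6 (R : realType) (n m k : nat) (s : 'I_n -> R)
  (hm1 : (1 <= m)%N) (hmn : (m <= n)%N)
  (hs : forall i, 0 < s i)
  (hcover : forall i : 'I_n, exists j : nat, (1 <= j <= k)%N /\ i \in Gj s j) :
  exists eta : {set 'I_n} -> R,
    [/\ \sum_(F : {set 'I_n} | #|F| == m.-1) eta F = 1,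
        (forall F : {set 'I_n}, #|F| = m.-1 -> 0 <= eta F) &
        1 / 3 * \sum_(j in Gm s k m) s j * ln (m%:R : R) <= objective m s eta].
Proof.
have c0 : 0 < sigmin s by apply: sigmin_gt0 => //; lia.
set Z := \sum_(F : {set 'I_n} | #|F| == m.-1) \prod_(i in F) s i.
have Z0 : 0 < Z.
  have hmn' : (m.-1 <= n)%N by lia.
  pose F0 := [set widen_ord hmn' i | i : 'I_m.-1].
  have cF0 : #|F0| = m.-1.
    rewrite card_imset ?card_ord // => a b /(congr1 val) /= e; exact: val_inj.
  rewrite /Z (bigD1 F0) ?cF0 //=.
  have h1 : 0 < \prod_(i in F0) s i by apply: prodr_gt0.
  have h2 : 0 <= \sum_(F : {set 'I_n} | (#|F| == m.-1) && (F != F0)) \prod_(i in F) s i.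
    by apply: sumr_ge0 => F _; apply: prodr_ge0 => i _; apply: ltW.
  by apply: (lt_le_trans h1); rewrite lerDl.
pose eta (F : {set 'I_n}) := (\prod_(i in F) s i) / Z.
have eta0 : forall F, 0 <= eta F.
  by move=> F; rewrite divr_ge0 ?(ltW Z0) // prodr_ge0 // => i _; apply: ltW.
exists eta; split => //.
  by rewrite -mulr_suml divff // gt_eqF.
have lnm0 : 0 <= ln (m%:R : R) by rewrite ln_ge0 // ler1n.
have key : forall M : {set 'I_n}, forall l, l \in M ->
    eta (M :\ l) * s l = (\prod_(i in M) s i) / Z.
  by move=> M l hl; rewrite /eta (big_setD1 l hl) /= mulrAC [_ * s l]mulrC.
have hEnt : forall M : {set 'I_n}, #|M| == m ->
    Ent M (fun l => eta (M :\ l) * s l) = ln (m%:R : R).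
  move=> M hM; set w := (\prod_(i in M) s i) / Z.
  have w0 : 0 < w by rewrite divr_gt0 // prodr_gt0.
  have hS : \sum_(j in M) eta (M :\ j) * s j = w *+ m.
    by rewrite (eq_bigr (fun=> w)) ?sumr_const ?(eqP hM) // => l hl; rewrite key.
  rewrite /Ent /= hS.
  rewrite (eq_bigr (fun=> (m%:R^-1 * ln (m%:R^-1 : R)))); last first.
    have hw : w / (w *+ m) = m%:R^-1.
      by rewrite -mulr_natr invfM mulrA divff ?mul1r // gt_eqF.
    by move=> l hl; rewrite key // -/w (gt_eqF w0) /= hw.
  have m0 : (0 : R) < m%:R by rewrite ltr0n.
  rewrite sumr_const (eqP hM) lnV ?posrE //.
  have e1 : m%:R^-1 *+ m = 1 :> R by rewrite -(mulr_natr (m%:R^-1 : R) m) mulVf // gt_eqF.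
  by rewrite -mulNrn mulrN opprK -mulrnAl e1 mul1r.
rewrite /objective.
rewrite (eq_bigr (fun M : {set 'I_n} => (\sum_(l in M) eta (M :\ l) * s l) * ln (m%:R : R))); last first.
  by move=> M hM; rewrite hEnt.
rewrite -mulr_suml -mulr_suml mulrA ler_wpM2r //.
rewrite (@double_count _ _ m (fun F l => eta F * s l)) //.
have -> : 1 / 3 * \sum_(i in Gm s k m) s i =
   \sum_(F : {set 'I_n} | #|F| == m.-1) eta F * (1 / 3 * \sum_(i in Gm s k m) s i).
  by rewrite -mulr_suml -mulr_suml divff ?gt_eqF // !mul1r.
rewrite ler_sum // => F hF.
rewrite -mulr_sumr ler_wpM2l //.
by apply: comb => //; apply/eqP.
Qed.
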